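(* Let $\mathcal A$ be the non-associative algebra whose atoms are $e,e',a,\breve a$, with identity $1'=e+e'$, $e,e'$ self-converse, $a$ and $\breve a$ converses of each other, and composition of atoms given by: $e;e=e$, $e;e'=0$, $e;a=a$, $e;\breve a=0$; $e';e=0$, $e';e'=e'$, $e';a=0$, $e';\breve a=\breve a$; $a;e=0$, $a;e'=a$, $a;a=a$, $a;\breve a=a+\breve a+e$; $\breve a;e=\breve a$, $\breve a;e'=0$, $\breve a;a=a+\breve a+e'$, $\breve a;\breve a=\breve a$ (extended to all elements by additivity; $\mathcal A$ is the complex algebra of this atom structure). Then $\mathcal A$ is a non-associative algebra which is not associative, has a feeble representation (e.g. over the base $\{0,1\}$ with $e\mapsto\{(0,0)\}$, $e'\mapsto\{(1,1)\}$, $a\mapsto\{(0,1)\}$, $\breve a\mapsto\{(1,0)\}$), but has no qualitative representation.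
   Context: A non-associative algebra is an algebra $(A,0,1,+,-,1',\breve{\ },;)$ such that $(A,0,1,+,-)$ is a boolean algebra (with $x\cdot y=-(-x+-y)$, $x\le y\iff x+y=y$); $1';x=x=x;1'$, $\breve{\breve x}=x$, $(x;y)\breve{}=\breve y;\breve x$; $\breve 0=x;0=0$, $(x+y)\breve{}=\breve x+\breve y$, $x;(y+z)=x;y+x;z$; and the Peircean law: $x;y\cdot\breve z=0$ iff $y;z\cdot\breve x=0$. For a map $\phi:A\to\wp(D\times D)$ consider the conditions: $\phi$ injective, $0^\phi=\varnothing$, $1^\phi=D\times D$, $(1')^\phi=\{(x,x):x\in D\}$, $(a+b)^\phi=a^\phi\cup b^\phi$, $(-a)^\phi=(D\times D)\setminus a^\phi$, $(\breve a)^\phi=\{(y,x):(x,y)\in a^\phi\}$. Such $\phi$ is a feeble representation if also $(a;b)^\phi\supseteq a^\phi\circ b^\phi$ for all $a,b$, and a qualitative representation if also $c^\phi\supseteq a^\phi\circ b^\phi\iff c\ge a;b$ for all $a,b,c$ ($\circ$ is relational composition). *)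

(* Defs.v *)
From HB Require Import structures.
From mathcomp Require Import all_boot.
Set Implicit Arguments. Unset Strict Implicit. Unset Printing Implicit Defensive.

Section NA.
Variables (A : Type) (zero one : A) (plus : A -> A -> A) (neg : A -> A)
          (ident : A) (conv : A -> A) (comp : A -> A -> A).

Definition meet (x y : A) : A := neg (plus (neg x) (neg y)).
Definition leA (x y : A) : Prop := plus x y = y.

Definition is_boolean_algebra : Prop :=
  (forall x y, plus x y = plus y x) /\
      (forall x y z, plus x (plus y z) = plus (plus x y) z) /\
      (forall x y, meet x y = meet y x) /\
      (forall x y z, meet x (meet y z) = meet (meet x y) z) /\
      (forall x y, plus x (meet x y) = x) /\
      (forall x y, meet x (plus x y) = x) /\
      (forall x y z, plus x (meet y z) = meet (plus x y) (plus x z)) /\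
      (forall x, plus x zero = x /\ meet x one = x) /\
      (forall x, plus x (neg x) = one /\ meet x (neg x) = zero).

Definition is_NA : Prop :=
  is_boolean_algebra /\
      (forall x, comp ident x = x /\ comp x ident = x) /\
      (forall x, conv (conv x) = x) /\
      (forall x y, conv (comp x y) = comp (conv y) (conv x)) /\
      (forall x, conv zero = zero /\ comp x zero = zero) /\
      (forall x y, conv (plus x y) = plus (conv x) (conv y)) /\
      (forall x y z, comp x (plus y z) = plus (comp x y) (comp x z)) /\
      (forall x y z, meet (comp x y) (conv z) = zero <->
                     meet (comp y z) (conv x) = zero).

Definition is_associative : Prop :=
  forall x y z, comp x (comp y z) = comp (comp x y) z.

Definition relcomp (D : Type) (R S : D -> D -> Prop) : D -> D -> Prop :=
  fun x z => exists y, R x y /\ S y z.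

Definition is_proper_map (D : Type) (phi : A -> D -> D -> Prop) : Prop :=
  (forall a b, (forall x y, phi a x y <-> phi b x y) -> a = b) /\
      (forall x y, ~ phi zero x y) /\
      (forall x y, phi one x y) /\
      (forall x y, phi ident x y <-> x = y) /\
      (forall a b x y, phi (plus a b) x y <-> (phi a x y \/ phi b x y)) /\
      (forall a x y, phi (neg a) x y <-> ~ phi a x y) /\
      (forall a x y, phi (conv a) x y <-> phi a y x).

Definition feeble_representation (D : Type) (phi : A -> D -> D -> Prop) : Prop :=
  is_proper_map phi /\
  (forall a b x z, relcomp (phi a) (phi b) x z -> phi (comp a b) x z).

Definition qualitative_representation (D : Type) (phi : A -> D -> D -> Prop) : Prop :=
  is_proper_map phi /\
  (forall a b c, (forall x z, relcomp (phi a) (phi b) x z -> phi c x z)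
                 <-> leA (comp a b) c).

End NA.

Inductive atom := At_e | At_e' | At_a | At_ca.

Definition atom_to_ord (x : atom) : 'I_4 :=
  match x with
  | At_e => inord 0 | At_e' => inord 1 | At_a => inord 2 | At_ca => inord 3
  end.
Definition ord_to_atom (i : 'I_4) : atom :=
  match val i with 0 => At_e | 1 => At_e' | 2 => At_a | _ => At_ca end.
Lemma atom_ordK : cancel atom_to_ord ord_to_atom.
Proof. by case; rewrite /ord_to_atom /= inordK. Qed.

HB.instance Definition _ := Finite.copy atom (can_type atom_ordK).

Definition atom_conv (x : atom) : atom :=
  match x with At_e => At_e | At_e' => At_e' | At_a => At_ca | At_ca => At_a end.

Definition atom_comp (x y : atom) : {set atom} :=
  match x, y with
  | At_e, At_e => [set At_e]
  | At_e, At_e' => set0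
  | At_e, At_a => [set At_a]
  | At_e, At_ca => set0
  | At_e', At_e => set0
  | At_e', At_e' => [set At_e']
  | At_e', At_a => set0
  | At_e', At_ca => [set At_ca]
  | At_a, At_e => set0
  | At_a, At_e' => [set At_a]
  | At_a, At_a => [set At_a]
  | At_a, At_ca => [set At_a; At_ca; At_e]
  | At_ca, At_e => [set At_ca]
  | At_ca, At_e' => set0
  | At_ca, At_a => [set At_a; At_ca; At_e']
  | At_ca, At_ca => [set At_ca]
  end.

Definition Alg := {set atom}.
Definition A_zero : Alg := set0.
Definition A_one : Alg := setT.
Definition A_plus (X Y : Alg) : Alg := X :|: Y.
Definition A_neg (X : Alg) : Alg := ~: X.
Definition A_ident : Alg := [set At_e; At_e'].
Definition A_conv (X : Alg) : Alg := [set atom_conv x | x in X].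
Definition A_comp (X Y : Alg) : Alg :=
  \bigcup_(x in X) \bigcup_(y in Y) atom_comp x y.

(* Main.v *)
Require Import Defs.
From mathcomp Require Import all_boot.
Set Implicit Arguments. Unset Strict Implicit. Unset Printing Implicit Defensive.

Definition atom_eqb (x y : atom) : bool := match x, y with
 | At_e, At_e | At_e', At_e' | At_a, At_a | At_ca, At_ca => true | _, _ => false end.
Lemma atom_eqE x y : (x == y) = atom_eqb x y.
Proof. apply/eqP/idP => [->|]; [by case: y | by case: x; case: y]. Qed.

Lemma meetE (X Y : Alg) : meet A_plus A_neg X Y = X :&: Y.
Proof. by rewrite /meet /A_plus /A_neg setCU !setCK. Qed.

Lemma convK x : atom_conv (atom_conv x) = x.
Proof. by case: x. Qed.

Lemma in_conv (X : Alg) x : (x \in A_conv X) = (atom_conv x \in X).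
Proof.
apply/imsetP/idP => [[y Hy ->]|H]; first by rewrite convK.
by exists (atom_conv x); rewrite ?convK.
Qed.

Lemma in_comp (X Y : Alg) x : (x \in A_comp X Y) =
  [exists a, exists b, [&& a \in X, b \in Y & x \in atom_comp a b]].
Proof.
apply/bigcupP/existsP => [[a Ha /bigcupP [b Hb Hx]]|[a /existsP [b /and3P [Ha Hb Hx]]]].
  by exists a; apply/existsP; exists b; rewrite Ha Hb Hx.
by exists a => //; apply/bigcupP; exists b.
Qed.

Lemma compP (X Y : Alg) x : reflect (exists a b, [/\ a \in X, b \in Y & x \in atom_comp a b])
  (x \in A_comp X Y).
Proof.
rewrite in_comp; apply: (iffP existsP) => [[a /existsP [b /and3P [? ? ?]]]|[a [b [? ? ?]]]].
  by exists a, b.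
by exists a; apply/existsP; exists b; apply/and3P.
Qed.

Lemma peirce_atom a b c :
  atom_conv a \in atom_comp b c -> atom_conv c \in atom_comp a b.
Proof. by move: a b c; do 3!case; rewrite ?inE ?atom_eqE. Qed.

Lemma conv_atom a b x :
  (atom_conv x \in atom_comp a b) = (x \in atom_comp (atom_conv b) (atom_conv a)).
Proof. by move: a b x; do 3!case; rewrite ?inE ?atom_eqE. Qed.

Lemma idl_atom a b x : a \in A_ident -> x \in atom_comp a b -> x = b.
Proof. by move: a b x; do 3!case; rewrite /A_ident ?inE ?atom_eqE. Qed.
Lemma idr_atom a b x : b \in A_ident -> x \in atom_comp a b -> x = a.
Proof. by move: a b x; do 3!case; rewrite /A_ident ?inE ?atom_eqE. Qed.

Definition idl (x : atom) := match x with At_e | At_a => At_e | _ => At_e' end.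
Definition idr (x : atom) := match x with At_e | At_ca => At_e | _ => At_e' end.
Lemma idl_ok x : idl x \in A_ident /\ x \in atom_comp (idl x) x.
Proof. by case: x; rewrite /A_ident ?inE ?atom_eqE. Qed.
Lemma idr_ok x : idr x \in A_ident /\ x \in atom_comp x (idr x).
Proof. by case: x; rewrite /A_ident ?inE ?atom_eqE. Qed.

Lemma peirce_dir X Y Z :
  meet A_plus A_neg (A_comp X Y) (A_conv Z) = A_zero ->
  meet A_plus A_neg (A_comp Y Z) (A_conv X) = A_zero.
Proof.
rewrite !meetE /A_zero => H; apply/setP => x; rewrite inE [in RHS]inE.
apply/negP => /andP [/compP [b [c [Hb Hc Hx]]]]; rewrite in_conv => Ha.
have Hc' : atom_conv c \in A_comp X Y.
  apply/compP; exists (atom_conv x), b; split => //.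
  by apply: peirce_atom; rewrite convK.
have : atom_conv c \in A_comp X Y :&: A_conv Z by rewrite inE Hc' in_conv convK.
by rewrite H inE.
Qed.

Lemma is_NA_A : is_NA A_zero A_one A_plus A_neg A_ident A_conv A_comp.
Proof.
split.
  rewrite /is_boolean_algebra.
  split; first exact: setUC.
  split; first exact: setUA.
  split; first by move=> x y; rewrite !meetE /A_plus /A_zero /A_one setIC.
  split; first by move=> x y z; rewrite !meetE /A_plus /A_zero /A_one setIA.
  split; first by move=> x y; rewrite meetE /A_plus /A_zero /A_one setIC setKI.
  split; first by move=> x y; rewrite meetE /A_plus /A_zero /A_one setUC setKU.
  split; first by move=> x y z; rewrite !meetE /A_plus /A_zero /A_one setUIr.
  split; first by move=> x; rewrite meetE /A_plus /A_zero /A_one setU0 setIT.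
  by move=> x; rewrite meetE /A_plus /A_zero /A_one setUCr setICr.
split.
  move=> X; split; apply/setP => x; apply/compP/idP.
  - by case=> [a [b [Ha Hb Hx]]]; rewrite (idl_atom Ha Hx).
  - by move=> Hx; case: (idl_ok x) => H1 H2; exists (idl x), x.
  - by case=> [a [b [Ha Hb Hx]]]; rewrite (idr_atom Hb Hx).
  - by move=> Hx; case: (idr_ok x) => H1 H2; exists x, (idr x).
split; first by move=> X; apply/setP => x; rewrite !in_conv convK.
split.
  move=> X Y; apply/setP => x; rewrite in_conv; apply/compP/compP.
  - case=> [a [b [Ha Hb Hx]]]; exists (atom_conv b), (atom_conv a).
    by rewrite !in_conv !convK -conv_atom.
  - case=> [b [a [Hb Ha Hx]]]; exists (atom_conv a), (atom_conv b).
    by split; rewrite -?in_conv // in_conv conv_atom !convK.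
split.
  move=> X; split; apply/setP => x; first by rewrite in_conv !inE.
  by rewrite [in RHS]inE; apply/compP => -[a [b [_]]]; rewrite inE.
split; first by move=> X Y; apply/setP => x; rewrite /A_plus in_conv !inE !in_conv.
split.
  move=> X Y Z; apply/setP => x; rewrite /A_plus inE; apply/compP/orP.
  - case=> [a [b [Ha]]]; rewrite inE => /orP [Hb|Hb] Hx.
      by left; apply/compP; exists a, b.
    by right; apply/compP; exists a, b.
  - by case=> /compP [a [b [Ha Hb Hx]]]; exists a, b; rewrite inE Hb ?orbT.
move=> X Y Z; split; first exact: peirce_dir.
by move=> H; apply: peirce_dir; apply: peirce_dir.
Qed.

Lemma not_assoc : ~ is_associative A_comp.
Proof.
move=> H; have := H [set At_a] [set At_ca] [set At_a].
move/setP => /(_ At_e).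
have -> : At_e \in A_comp [set At_a] (A_comp [set At_ca] [set At_a]).
  apply/compP; exists At_a, At_ca; split; rewrite ?inE ?atom_eqE //.
  by apply/compP; exists At_ca, At_a; rewrite ?inE ?atom_eqE.
move/esym/compP => [x [y [Hx Hy He]]].
move: Hy He => /set1P -> He; move: Hx => /compP [p [q [/set1P -> /set1P ->]]].
by case: x He; rewrite ?inE ?atom_eqE.
Qed.

Definition atom_of (x y : bool) : atom :=
  match x, y with
  | false, false => At_e | true, true => At_e' | false, true => At_a | true, false => At_ca
  end.
Definition pre (t : atom) : bool * bool :=
  match t with At_e => (false, false) | At_e' => (true, true)
  | At_a => (false, true) | At_ca => (true, false) end.
Lemma preK t : atom_of (pre t).1 (pre t).2 = t.
Proof. by case: t. Qed.

Definition phi0 (X : Alg) (x y : bool) : Prop := atom_of x y \in X.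

Lemma feeble : feeble_representation A_zero A_one A_plus A_neg A_ident A_conv A_comp phi0.
Proof.
split.
  split.
    move=> X Y H; apply/setP => t; rewrite -(preK t); apply/idP/idP; apply H.
  split; first by move=> x y; rewrite /phi0 inE.
  split; first by move=> x y; rewrite /phi0 inE.
  split.
    move=> x y; rewrite /phi0 /A_ident !inE !atom_eqE.
    by case: x; case: y; split.
  split.
    by move=> X Y x y; rewrite /phi0 /A_plus inE; split => /orP.
  split.
    by move=> X x y; rewrite /phi0 /A_neg inE; split => /negP.
  move=> X x y; rewrite /phi0 in_conv.
  have -> : atom_conv (atom_of x y) = atom_of y x by case: x; case: y.
  by [].
move=> X Y x z [y [H1 H2]]; rewrite /phi0; apply/compP.
exists (atom_of x y), (atom_of y z); split => //.
by clear H1 H2; case: x; case: y; case: z; rewrite ?inE ?atom_eqE.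
Qed.

Lemma no_qual (D : Type) (phi : Alg -> D -> D -> Prop) :
  ~ qualitative_representation A_zero A_one A_plus A_neg A_ident A_conv A_comp phi.
Proof.
case=> [[_ [H0 [_ [Hid [Hplus _]]]]] Hq].
have Hz : forall X Y, A_comp X Y = A_zero ->
    forall x y z, phi X x y -> phi Y y z -> False.
  move=> X Y E x y z h1 h2.
  have [_ /(_ _) H] := Hq X Y A_zero.
  apply: (H0 x z); apply: H; last by exists y.
  by rewrite E /leA /A_plus setU0.
have E1 : A_comp [set At_a] [set At_e] = A_zero.
  apply/setP => t; rewrite inE; apply/compP => -[p [q [/set1P -> /set1P ->]]].
  by rewrite inE.
have E2 : A_comp [set At_e'] [set At_a] = A_zero.
  apply/setP => t; rewrite inE; apply/compP => -[p [q [/set1P -> /set1P ->]]].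
  by rewrite inE.
have Hcomp : forall x z, relcomp (phi [set At_a]) (phi [set At_a]) x z -> phi A_zero x z.
  move=> x z [y [h1 h2]].
  have : phi A_ident y y by apply/Hid.
  have -> : A_ident = A_plus [set At_e] [set At_e'] by [].
  move/Hplus => [h|h]; first by case: (Hz _ _ E1 _ _ _ h1 h).
  by case: (Hz _ _ E2 _ _ _ h h2).
have := (proj1 (Hq _ _ _)) Hcomp.
rewrite /leA /A_plus /A_zero setU0 => /setP /(_ At_a).
rewrite inE => /compP; apply; exists At_a, At_a; rewrite !inE ?atom_eqE.
by [].
Qed.

Theorem mainTheorem13 :
  is_NA A_zero A_one A_plus A_neg A_ident A_conv A_comp /\
  ~ is_associative A_comp /\
  (exists (D : Type) (phi : Alg -> D -> D -> Prop),
      feeble_representation A_zero A_one A_plus A_neg A_ident A_conv A_comp phi) /\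
  (forall (D : Type) (phi : Alg -> D -> D -> Prop),
      ~ qualitative_representation A_zero A_one A_plus A_neg A_ident A_conv A_comp phi).
Proof.
split; first exact: is_NA_A.
split; first exact: not_assoc.
split; first by exists bool, phi0; exact: feeble.
exact: no_qual.
Qed.
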